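(* The calculus $\lambda_{\parallel}$ terminates: if $\Gamma\vdash M:\alpha$ in $\lambda_{\parallel}$, then there is no infinite reduction sequence $M\to M_1\to M_2\to\cdots$.
   Context: Terms are considered up to $\alpha$-renaming; $[V/x]M$ is capture-avoiding substitution. The parallel call-by-value $\lambda$-calculus $\lambda_{\parallel}$: values $V::=*\mid\lambda x.M\mid x$; terms $M::=V\mid MM\mid (M\mid M)$; evaluation contexts $E::=[\,]\mid E[[\,]M]\mid E[V[\,]]\mid E[[\,]\mid M]\mid E[M\mid[\,]]$; value types $A::=1\mid A\to\alpha$; types $\alpha::=A\mid b$ ($b$ a distinguished behavior type). Reduction: $E[(\lambda x.M)V]\to E[[V/x]M]$. Typing ($\Gamma$ a finite map from variables to value types): $\Gamma\vdash x:A$ if $x:A\in\Gamma$; $\Gamma\vdash *:1$; $\Gamma\vdash\lambda x.M:A\to\alpha$ if $\Gamma,x:A\vdash M:\alpha$; $\Gamma\vdash MN:\alpha$ if $\Gamma\vdash M:A\to\alpha$ and $\Gamma\vdash N:A$; $\Gamma\vdash (M_1\mid M_2):b$ if $\Gamma\vdash M_i:b$ for $i=1,2$. *)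

(* Defs.v *)
(* Parallel call-by-value lambda calculus lambda_par,
   with terms represented by de Bruijn indices (terms up to alpha-renaming). *)
From Stdlib Require Import List Arith.
Import ListNotations.

Inductive term : Type :=
| tvar  : nat -> term
| tunit : term
| tlam  : term -> term
| tapp  : term -> term -> term
| tpar  : term -> term -> term.

Definition is_value (t : term) : Prop :=
  match t with
  | tvar _ | tunit | tlam _ => True
  | _ => False
  end.

Definition up_ren (r : nat -> nat) : nat -> nat :=
  fun n => match n with 0 => 0 | S n' => S (r n') end.

Fixpoint rename (r : nat -> nat) (t : term) : term :=
  match t with
  | tvar n => tvar (r n)
  | tunit => tunit
  | tlam M => tlam (rename (up_ren r) M)
  | tapp M N => tapp (rename r M) (rename r N)
  | tpar M N => tpar (rename r M) (rename r N)
  end.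

Definition up_sub (s : nat -> term) : nat -> term :=
  fun n => match n with 0 => tvar 0 | S n' => rename S (s n') end.

Fixpoint subst (s : nat -> term) (t : term) : term :=
  match t with
  | tvar n => s n
  | tunit => tunit
  | tlam M => tlam (subst (up_sub s) M)
  | tapp M N => tapp (subst s M) (subst s N)
  | tpar M N => tpar (subst s M) (subst s N)
  end.

(* [V/x]M, where x is the bound variable 0 of the body M *)
Definition subst1 (V M : term) : term :=
  subst (fun n => match n with 0 => V | S n' => tvar n' end) M.

(* Reduction E[(lambda x.M) V] -> E[[V/x]M], with
   E ::= [] | E[[] M] | E[V []] | E[[] | M] | E[M | []]  *)
Inductive step : term -> term -> Prop :=
| step_beta : forall M V, is_value V -> step (tapp (tlam M) V) (subst1 V M)
| step_appL : forall M M' N, step M M' -> step (tapp M N) (tapp M' N)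
| step_appR : forall V N N', is_value V -> step N N' -> step (tapp V N) (tapp V N')
| step_parL : forall M M' N, step M M' -> step (tpar M N) (tpar M' N)
| step_parR : forall M N N', step N N' -> step (tpar M N) (tpar M N').

Inductive vty : Type :=
| vone : vty
| varr : vty -> ty -> vty
with ty : Type :=
| tyv : vty -> ty
| tyb : ty.

Inductive has_type : list vty -> term -> ty -> Prop :=
| ty_var : forall G n A, nth_error G n = Some A -> has_type G (tvar n) (tyv A)
| ty_unit : forall G, has_type G tunit (tyv vone)
| ty_lam : forall G A a M, has_type (A :: G) M a -> has_type G (tlam M) (tyv (varr A a))
| ty_app : forall G A a M N,
    has_type G M (tyv (varr A a)) -> has_type G N (tyv A) -> has_type G (tapp M N) a
| ty_par : forall G M1 M2,
    has_type G M1 tyb -> has_type G M2 tyb -> has_type G (tpar M1 M2) tyb.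

(* Main.v *)
Require Import Defs.
From Stdlib Require Import List Arith.
Import ListNotations.

Definition SN := Acc (fun y x => step x y).

Inductive star : term -> term -> Prop :=
| star_refl : forall t, star t t
| star_step : forall t u v, step t u -> star u v -> star t v.

Lemma value_nostep : forall V t, is_value V -> ~ step V t.
Proof. intros V t H S; destruct S; simpl in H; auto. Qed.

Fixpoint VV (A : vty) (t : term) : Prop :=
  match A with
  | vone => is_value t
  | varr A a => is_value t /\ forall W, VV A W -> EE a (tapp t W)
  end
with EE (a : ty) (t : term) : Prop :=
  match a with
  | tyv A => SN t /\ forall t', star t t' -> is_value t' -> VV A t'
  | tyb => SN t
  end.

Lemma VV_value : forall A t, VV A t -> is_value t.
Proof. destruct A; simpl; tauto. Qed.

Lemma EE_SN : forall a t, EE a t -> SN t.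
Proof. destruct a; simpl; tauto. Qed.

Lemma CR2 : forall a t t', EE a t -> step t t' -> EE a t'.
Proof.
  destruct a; simpl; intros t t' H S.
  - destruct H as [H1 H2]. split.
    + exact (Acc_inv H1 S).
    + intros u Su Vu. apply H2; auto. eapply star_step; eauto.
  - exact (Acc_inv H S).
Qed.

Lemma CR3 : forall a t, ~ is_value t -> (forall t', step t t' -> EE a t') -> EE a t.
Proof.
  destruct a; simpl; intros t NV H.
  - split.
    + constructor. intros y S. apply H in S. tauto.
    + intros u Su Vu. inversion Su; subst.
      * contradiction.
      * apply (H _ H0); auto.
  - constructor. intros y S. apply H in S. auto.
Qed.

Lemma VV_EE : forall A t, VV A t -> EE (tyv A) t.
Proof.
  intros A t H. simpl. split.
  - constructor. intros y S. exfalso. eapply value_nostep; eauto. eapply VV_value; eauto.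
  - intros u Su Vu. inversion Su; subst; auto.
    exfalso. eapply value_nostep; [eapply VV_value; exact H| exact H0].
Qed.

Lemma rename_ext : forall t r1 r2, (forall n, r1 n = r2 n) -> rename r1 t = rename r2 t.
Proof.
  induction t; intros r1 r2 H; simpl; f_equal; auto.
  apply IHt. intros [|n]; simpl; auto.
Qed.

Lemma subst_ext : forall t s1 s2, (forall n, s1 n = s2 n) -> subst s1 t = subst s2 t.
Proof.
  induction t; intros s1 s2 H; simpl; f_equal; auto.
  apply IHt. intros [|n]; simpl; auto. rewrite H; auto.
Qed.

Lemma rename_rename : forall t r1 r2, rename r1 (rename r2 t) = rename (fun n => r1 (r2 n)) t.
Proof.
  induction t; intros r1 r2; simpl; f_equal; auto.
  rewrite IHt. apply rename_ext. intros [|n]; simpl; auto.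
Qed.

Lemma subst_rename : forall t s r, subst s (rename r t) = subst (fun n => s (r n)) t.
Proof.
  induction t; intros s r; simpl; f_equal; auto.
  rewrite IHt. apply subst_ext. intros [|n]; simpl; auto.
Qed.

Lemma rename_subst : forall t s r, rename r (subst s t) = subst (fun n => rename r (s n)) t.
Proof.
  induction t; intros s r; simpl; f_equal; auto.
  rewrite IHt. apply subst_ext. intros [|n]; simpl; auto.
  rewrite !rename_rename. apply rename_ext. intros; reflexivity.
Qed.

Lemma subst_subst : forall t s1 s2, subst s1 (subst s2 t) = subst (fun n => subst s1 (s2 n)) t.
Proof.
  induction t; intros s1 s2; simpl; f_equal; auto.
  rewrite IHt. apply subst_ext. intros [|n]; simpl; auto.
  rewrite subst_rename, rename_subst. apply subst_ext. intros; reflexivity.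
Qed.

Lemma subst_id : forall t, subst tvar t = t.
Proof.
  induction t; simpl; f_equal; auto.
  rewrite <- IHt at 2. apply subst_ext. intros [|n]; simpl; auto.
Qed.

Definition scons (W : term) (s : nat -> term) : nat -> term :=
  fun n => match n with 0 => W | S n' => s n' end.

Lemma subst1_up : forall W s M, subst1 W (subst (up_sub s) M) = subst (scons W s) M.
Proof.
  intros. unfold subst1. rewrite subst_subst. apply subst_ext.
  intros [|n]; simpl; auto. rewrite subst_rename.
  rewrite <- (subst_id (s n)) at 2. apply subst_ext. intros; reflexivity.
Qed.

Lemma app_lemma : forall A a M, EE (tyv (varr A a)) M -> forall N, EE (tyv A) N ->
  EE a (tapp M N).
Proof.
  intros A a M HM. assert (HS : SN M) by exact (proj1 HM).
  revert HM. induction HS as [M _ IHM]. intros HM N HN.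
  assert (HSN : SN N) by exact (proj1 HN). revert HN.
  induction HSN as [N _ IHN]. intros HN.
  apply CR3; [simpl; auto|]. intros t' S. inversion S; subst.
  - assert (VM : VV (varr A a) (tlam M0)) by (apply (proj2 HM); [constructor|exact I]).
    assert (VN : VV A N) by (apply (proj2 HN); [constructor|auto]).
    destruct VM as [_ VM]. eapply CR2; [apply VM; exact VN| exact S].
  - apply IHM; auto. eapply CR2; eauto.
  - apply IHN; auto. eapply CR2; eauto.
Qed.

Lemma par_lemma : forall M, SN M -> forall N, SN N -> SN (tpar M N).
Proof.
  intros M HM. induction HM as [M _ IHM]. intros N HN.
  induction HN as [N HN' IHN]. constructor. intros y S. inversion S; subst.
  - apply IHM; auto. constructor; auto.
  - apply IHN; auto.
Qed.

Lemma fundamental : forall G M a, has_type G M a ->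
  forall s, (forall n A, nth_error G n = Some A -> VV A (s n)) -> EE a (subst s M).
Proof.
  induction 1; intros s Hs.
  - apply VV_EE. simpl. auto.
  - apply (VV_EE vone). simpl. exact I.
  - simpl. apply (VV_EE (varr A a)). simpl. split; [exact I|]. intros W HW.
    apply CR3; [simpl; auto|]. intros t' S. inversion S; subst.
    + rewrite subst1_up. apply IHhas_type. intros [|n] B E; simpl in *.
      * inversion E; subst; auto.
      * auto.
    + inversion H3.
    + exfalso. eapply value_nostep; [|eauto]. eapply VV_value; eauto.
  - simpl. eapply app_lemma; eauto.
  - simpl. apply par_lemma; [apply (IHhas_type1 s Hs)|apply (IHhas_type2 s Hs)].
Qed.

Lemma var_VV : forall A n, VV A (tvar n).
Proof.
  destruct A as [|A a]; simpl; intros n; split; auto. intros W HW.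
  assert (VW := VV_value _ _ HW).
  assert (NS : forall t, ~ step (tapp (tvar n) W) t).
  { intros t S. inversion S; subst; [inversion H2|]. eapply value_nostep; [exact VW|eassumption]. }
  apply CR3; [simpl; auto|]. intros t S. exfalso; eapply NS; eauto.
Qed.

Lemma SN_noinf : forall x, SN x -> forall f, f 0 = x -> (forall n, step (f n) (f (S n))) -> False.
Proof.
  intros x H. induction H as [x _ IH]. intros f E Hf.
  apply (IH (f 1) (ltac:(rewrite <- E; apply Hf)) (fun n => f (S n)) eq_refl).
  intros n; apply Hf.
Qed.

Theorem proposition1 (G : list vty) (M : term) (a : ty) :
  has_type G M a ->
  ~ (exists f : nat -> term, f 0 = M /\ forall n, step (f n) (f (S n))).
Proof.
  intros H [f [E Hf]].
  assert (HE := fundamental _ _ _ H tvar (fun n A _ => var_VV A n)).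
  rewrite subst_id in HE. eapply SN_noinf; [eapply EE_SN; exact HE| exact E | exact Hf].
Qed.
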